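(* Let $p$ be a prime and let $A\subseteq\mathbb{Z}_p^2$ with $|A|=p-1+\mathrm{Ol}(\mathbb{Z}_p)$. Let $U\le\mathbb{Z}_p^2$ be a subgroup with $U\cong\mathbb{Z}_p$, let $B\subseteq A$, let $\pi:\mathbb{Z}_p^2\to\mathbb{Z}_p$ be a surjective homomorphism with kernel $U$, and let $x_1,\dots,x_p$ be representatives of the cosets of $U$ in $\mathbb{Z}_p^2$. For $x\in\mathbb{Z}_p^2$ and a set $C$ write $N(x,U,C)=|C\cap(x+U)|$. Suppose that every element of $\mathbb{Z}_p$ is the sum of some (possibly empty) sub-multiset of the multiset $\pi(B)=\{\pi(b):b\in B\}$, and that \[ \sum_{i=1}^{p}\left\lfloor \frac{N(x_i,U,A\setminus B)}{2}\right\rfloor\left\lceil \frac{N(x_i,U,A\setminus B)}{2}\right\rceil\geq p+1. \] Then $A$ contains a non-empty subset whose sum is $0$.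
   Context: $\mathrm{Ol}(\mathbb{Z}_p)$ denotes the smallest integer $k$ such that every set of $k$ distinct elements of $\mathbb{Z}_p$ contains a non-empty subset with sum $0$. *)

(* Defs.v *)
From HB Require Import structures.
From mathcomp Require Import all_boot all_order all_algebra.
Set Implicit Arguments. Unset Strict Implicit. Unset Printing Implicit Defensive.
Import GRing.Theory.
Local Open Scope ring_scope.

Definition Zp2 (p : nat) := ('Z_p * 'Z_p)%type.

Definition Ol_prop (p k : nat) : Prop :=
  forall S : {set 'Z_p}, #|S| = k ->
    exists T : {set 'Z_p}, [/\ T \subset S, T != set0 & \sum_(t in T) t = 0].

Definition is_Ol (p k : nat) : Prop :=
  Ol_prop p k /\ forall j, Ol_prop p j -> (k <= j)%N.

Definition coset2 (p : nat) (x : Zp2 p) (U : {set Zp2 p}) : {set Zp2 p} :=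
  [set x + u | u in U].

Definition Ncount (p : nat) (x : Zp2 p) (U C : {set Zp2 p}) : nat :=
  #|C :&: coset2 x U|.

(* Main.v *)
Require Import Defs.
From HB Require Import structures.
From mathcomp Require Import all_boot all_order all_algebra.
From mathcomp Require Import ring zify.
From mathcomp Require Import fingroup perm.
Import GRing.Theory.
Local Open Scope ring_scope.

Set Implicit Arguments. Unset Strict Implicit. Unset Printing Implicit Defensive.

Section Engine.
Variable F : finFieldType.
Variable K : nat.
Variable t : 'I_K -> nat.
Variable S : 'I_K -> {set F}.
Hypothesis cardS : forall i, #|S i| = (t i).+1.
Hypothesis factnz : forall i a, (a <= t i)%N -> (a`!)%:R != 0 :> F.

Definition wt i (c : F) := (\prod_(d <- enum (S i :\ c)) (c - d))^-1.

Lemma lamE i e : (e <= t i)%N -> \sum_(c in S i) c ^+ e * wt i c = (e == t i)%:R.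
Proof.
move=> le.
pose Lc c := \prod_(d <- enum (S i :\ c)) ('X - d%:P).
pose R := \sum_(c in S i) (c ^+ e * wt i c) *: Lc c - 'X^e.
have sizeLc c : c \in S i -> size (Lc c) = (t i).+1.
  move=> cS; rewrite size_prod_XsubC -cardE.
  by move: (cardS i); rewrite (cardsD1 c) cS add1n.
have hornLc c c0 : (Lc c).[c0] = \prod_(d <- enum (S i :\ c)) (c0 - d).
  by rewrite horner_prod; apply: eq_bigr => d _; rewrite hornerXsubC.
have R0 : R = 0.
  have [//|Rn0] := eqVneq R 0; exfalso.
  have hall : all (root R) (enum (S i)).
    apply/allP => c0; rewrite mem_enum => c0S.
    rewrite /root /R hornerD hornerN hornerXn.
    rewrite horner_sum (bigD1 c0) //= big1 ?addr0.
      rewrite hornerZ hornLc -mulrA mulVf ?mulr1 ?subrr //.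
      rewrite prodf_seq_neq0; apply/allP => d; rewrite mem_enum !inE => /andP[dc _].
      by rewrite subr_eq0 eq_sym.
    move=> c /andP[cS cc0]; rewrite hornerZ hornLc.
    rewrite (bigD1_seq c0) /= ?subrr ?mul0r ?mulr0 //.
      by rewrite mem_enum !inE eq_sym cc0.
    exact: enum_uniq.
  have := max_poly_roots Rn0 hall (enum_uniq _); rewrite -cardE cardS.
  apply/negP; rewrite -leqNgt /R.
  apply: leq_trans (size_polyD _ _) _; rewrite geq_max size_polyN size_polyXn ltnS le andbT.
  apply: leq_trans (size_sum _ _ _) _.
  apply/bigmax_leqP => c cS; apply: leq_trans (size_scale_leq _ _) _.
  by rewrite sizeLc.
have : R`_(t i) = 0 by rewrite R0 coef0.
rewrite /R coefB coef_sum coefXn.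
have Lt c : c \in S i -> (Lc c)`_(t i) = 1.
  move=> cS; have := monicP (monic_prod_XsubC (enum (S i :\ c)) xpredT id).
  by rewrite lead_coefE -/(Lc c) sizeLc.
under eq_bigr => c cS do rewrite coefZ Lt // mulr1.
by move/eqP; rewrite subr_eq0 => /eqP ->; rewrite eq_sym.
Qed.

Lemma natnz i a : (0 < a <= t i)%N -> a%:R != 0 :> F.
Proof.
case: a => // a /= le; have := factnz le; rewrite factS natrM mulf_eq0 negb_or.
by case/andP.
Qed.

Definition Psi (e : 'I_K -> nat) j :=
  \sum_(c in family (fun i => mem (S i)))
     (\prod_i (c i ^+ e i * wt i (c i))) * (\sum_i c i) ^+ j.

Lemma Psi0 e : Psi e 0 = \prod_i \sum_(c in S i) c ^+ e i * wt i c.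
Proof.
rewrite [RHS]bigA_distr_big_dep /Psi.
by apply: eq_bigr => c _; rewrite expr0 mulr1.
Qed.

Definition dlt (e : 'I_K -> nat) l := fun i => (e i + (i == l))%N.

Lemma PsiS e j : Psi e j.+1 = \sum_l Psi (dlt e l) j.
Proof.
rewrite /Psi /dlt exchange_big /=; apply: eq_bigr => c _.
rewrite exprSr mulrCA mulr_sumr mulr_sumr; apply: eq_bigr => l _.
rewrite mulrC; congr (_ * _).
rewrite (bigD1 l) //= [in RHS](bigD1 l) //= eqxx addn1 exprS.
rewrite [LHS]mulrC !mulrA; congr (_ * _).
by apply: eq_bigr => i /negbTE ->; rewrite addn0.
Qed.

Lemma sum_eq_of_le (a b : 'I_K -> nat) :
  (forall i, a i <= b i)%N -> (\sum_i b i <= \sum_i a i)%N -> forall i, a i = b i.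
Proof.
move=> ab le i; have : (\sum_i (b i - a i) == 0)%N.
  rewrite sumnB //; rewrite subn_eq0 //.
rewrite sum_nat_eq0 => /forallP /(_ i) /=; rewrite subn_eq0 => ba.
by apply/eqP; rewrite eqn_leq ab.
Qed.

Lemma sum_delta (e : 'I_K -> nat) l :
  (\sum_i dlt e l i = \sum_i e i + 1)%N.
Proof.
rewrite /dlt big_split /=; congr (_ + _)%N.
by rewrite (bigD1 l) //= eqxx big1 // => i /negbTE ->.
Qed.

Lemma PsiE j : forall e, (\sum_i e i + j <= \sum_i t i)%N ->
  Psi e j = if ((\sum_i e i + j == \sum_i t i) && [forall i, e i <= t i])%N
            then j`!%:R / \prod_i ((t i - e i)`!)%:R else 0.
Proof.
elim: j => [|j IH] e hle.
  rewrite Psi0 addn0; rewrite addn0 in hle; case: (boolP [exists i, e i < t i]%N).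
    case/existsP => i lt.
    rewrite (bigD1 i) //= (lamE (ltnW lt)) (ltn_eqF lt) mul0r.
    case: ifP => // /andP[/eqP es /forallP al].
    have := sum_eq_of_le al; rewrite es leqnn => /(_ isT i) eq.
    by move: lt; rewrite eq ltnn.
  rewrite negb_exists => /forallP al.
  have al' : forall i, (t i <= e i)%N by move=> i; have := al i; rewrite -leqNgt.
  have eqs := sum_eq_of_le al' hle.
  rewrite big1; last by move=> i _; rewrite -eqs (lamE (leqnn _)) eqxx.
  have -> : (\sum_i e i = \sum_i t i)%N by apply: eq_bigr => i _; rewrite eqs.
  rewrite eqxx /=; have -> : [forall i, e i <= t i]%N by apply/forallP => i; rewrite eqs.
  rewrite big1 ?invr1 ?mulr1 // => i _; by rewrite eqs subnn.
rewrite PsiS.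
have hle' l : (\sum_i dlt e l i + j <= \sum_i t i)%N.
  by rewrite sum_delta -addnA add1n.
rewrite (eq_bigr _ (fun l _ => IH _ (hle' l))).
under eq_bigr => l _ do rewrite sum_delta -addnA add1n /dlt.
case: ifP => [/andP[/eqP es /forallP al]|nc]; last first.
  apply: big1 => l _; case: ifP => // /andP[es2 /forallP al] ; move: nc.
  rewrite es2 /=; have -> // : [forall i, e i <= t i]%N.
  apply/forallP => i; apply: leq_trans (al i); exact: leq_addr.
set P := \prod_i _.
have Pnz : P != 0.
  by apply/prodf_neq0 => i _; apply: (@factnz i); exact: leq_subr.
have term l : (if ((\sum_i e i + j.+1 == \sum_i t i) &&
        [forall i, e i + (i == l) <= t i])%N
      then j`!%:R / \prod_i ((t i - (e i + (i == l)))`!)%:R else 0)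
      = (t l - e l)%:R * (j`!%:R / P).
  rewrite es eqxx /=.
  case: (ltnP (e l) (t l)) => lt.
    have -> : [forall i, e i + (i == l) <= t i]%N.
      apply/forallP => i; case: (eqVneq i l) => [->|ne]; first by rewrite addn1.
      by rewrite addn0.
    have Pl : P = (t l - e l)%:R * \prod_i ((t i - (e i + (i == l)))`!)%:R.
      rewrite /P (bigD1 l) //= [in RHS](bigD1 l) //= eqxx addn1 subnS.
      have fS n : (0 < n)%N -> (n * n.-1`! = n`!)%N by case: n.
      rewrite mulrA -natrM fS ?subn_gt0 //; congr (_ * _).
      by apply: eq_bigr => i /negbTE ->; rewrite addn0.
    have nz1 : (t l - e l)%:R != 0 :> F by apply: (@natnz l); rewrite subn_gt0 lt leq_subr.
    have nz2 : \prod_i ((t i - (e i + (i == l)))`!)%:R != 0 :> F.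
      by apply/prodf_neq0 => i _; apply: (@factnz i); exact: leq_subr.
    rewrite Pl; field; by rewrite nz1 nz2.
  have -> : (t l - e l = 0)%N by apply/eqP; rewrite subn_eq0.
  rewrite mul0r; case: ifP => // /forallP /(_ l); rewrite eqxx addn1 => lt'.
  by move: (leq_ltn_trans lt lt'); rewrite ltnn.
under eq_bigr => l _ do rewrite term.
rewrite -mulr_suml -natr_sum sumnB // -es.
rewrite addKn factS natrM; field; by rewrite Pnz.
Qed.


Lemma engine (Idx : finType) (a : Idx -> F) (ex : Idx -> 'I_K -> nat) D
    (q : {poly F}) m :
  (forall s, \sum_i ex s i = D)%N -> q \is monic -> size q = m.+1 ->
  (D + m = \sum_i t i)%N ->
  \sum_(c in family (fun i => mem (S i)))
     (\prod_i wt i (c i)) * ((\sum_s a s * \prod_i c i ^+ ex s i) * q.[\sum_i c i])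
  = \sum_s a s * (if [forall i, ex s i <= t i]%N
                  then m`!%:R / \prod_i ((t i - ex s i)`!)%:R else 0).
Proof.
move=> hD mq sq hm.
transitivity (\sum_(c in family (fun i => mem (S i))) \sum_s \sum_(j < m.+1)
   a s * q`_j * ((\prod_i (c i ^+ ex s i * wt i (c i))) * (\sum_i c i) ^+ j)).
  apply: eq_bigr => c _.
  rewrite (horner_coef_wide _ (eq_leq sq)) mulr_suml mulr_sumr; apply: eq_bigr => s _.
  rewrite mulr_sumr mulr_sumr; apply: eq_bigr => j _.
  rewrite big_split /=; ring.
rewrite exchange_big /=; apply: eq_bigr => s _.
rewrite exchange_big /=.
under eq_bigr => j _ do rewrite -mulr_sumr.
rewrite big_ord_recr /= big1 ?add0r.
  have -> : q`_m = 1 by have := monicP mq; rewrite lead_coefE sq.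
  rewrite mulr1; congr (_ * _).
  by rewrite -/(Psi (ex s) m) PsiE hD ?hm // eqxx.
move=> j _; rewrite -/(Psi (ex s) j) PsiE hD.
  by rewrite -hm eqn_add2l (ltn_eqF (ltn_ord j)) /= mulr0.
by rewrite -hm leq_add2l ltnW.
Qed.

End Engine.

Section Sums.
Variable F : finFieldType.
Variable p : nat.
Hypothesis pr : prime p.
Hypothesis chp : p \in [pchar F].

Lemma nat_nz a : (0 < a < p)%N -> a%:R != 0 :> F.
Proof.
case/andP => a0 ap; rewrite -(dvdn_pcharf chp); by rewrite gtnNdvd.
Qed.

Lemma fact_nz a : (a < p)%N -> (a`!)%:R != 0 :> F.
Proof.
rewrite -(dvdn_pcharf chp); elim: a => [|a IH] lt; first by rewrite fact0 dvdn1; case: eqP pr => // ->.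
rewrite factS Euclid_dvdM // negb_or IH ?(ltnW lt) // andbT; by rewrite gtnNdvd.
Qed.

Lemma nat_inj a b : (a < p)%N -> (b < p)%N -> a%:R = b%:R :> F -> a = b.
Proof.
wlog le : a b / (a <= b)%N => [H ap bp e|ap bp e].
  by case: (leqP a b) => ab; [|apply/esym]; apply: H => //; exact: ltnW.
apply/eqP; rewrite eqn_leq le /= leqNgt; apply/negP => lt.
have : (b - a)%:R != 0 :> F.
  by apply: nat_nz; rewrite subn_gt0 lt /= (leq_ltn_trans (leq_subr _ _) bp).
by rewrite natrB ?(ltnW lt) // e subrr eqxx.
Qed.

Lemma size_ie j : size (index_enum 'I_j) = j.
Proof. by rewrite -[index_enum _]enumT -cardT card_ord. Qed.

Lemma detM_nz k (t : 'I_k -> nat) : injective t -> (forall i, t i < p)%N ->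
  \det (\matrix_(i, j) (if (j <= t i)%N then ((t i - j)`!)%:R^-1 else 0) : 'M[F]_k) != 0.
Proof.
move=> tinj tp.
pose d := \row_i ((t i)`!)%:R^-1 : 'rV[F]_k.
pose a := \row_i ((t i)%:R) : 'rV[F]_k.
pose P (j : nat) := \prod_(r < j) ('X - (r%:R)%:P) : {poly F}.
have sP j : size (P j) = j.+1.
  by rewrite /P size_prod_XsubC size_ie.
pose Uc := \matrix_(l, j) (P j)`_l : 'M[F]_k.
have E : (\matrix_(i, j) (if (j <= t i)%N then ((t i - j)`!)%:R^-1 else 0) : 'M[F]_k)
     = diag_mx d *m ((Vandermonde k a)^T *m Uc).
  apply/matrixP => i j; rewrite mul_diag_mx !mxE.
  under eq_bigr => l _ do rewrite !mxE mulrC.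
  rewrite -(horner_coef_wide _ (_ : size (P j) <= k)%N); last by rewrite sP.
  rewrite horner_prod.
  under eq_bigr => r _ do rewrite hornerXsubC.
  case: ifP => jt.
    have -> : \prod_(r < j) ((t i)%:R - r%:R) = ((t i) ^_ j)%:R :> F.
      rewrite ffact_prod natr_prod; apply: eq_bigr => r _; rewrite natrB //.
      exact: leq_trans (ltnW (ltn_ord r)) jt.
    have h := ffact_fact jt.
    have nz1 := fact_nz (tp i).
    have nz2 : ((t i - j)`!)%:R != 0 :> F.
      by apply: fact_nz; apply: leq_ltn_trans (tp i); exact: leq_subr.
    apply: (mulfI nz2); rewrite mulfV // mulrCA -natrM mulnC h mulVf //.
  have tj : (t i < j)%N by rewrite ltnNge jt.
  by rewrite (bigD1 (Ordinal tj)) //= subrr mul0r mulr0.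
rewrite E det_mulmx det_diag det_mulmx det_tr det_Vandermonde.
have -> : \det Uc = 1.
  rewrite -det_tr det_trig; last first.
    apply/forallP => i; apply/forallP => j; apply/implyP => ij.
    rewrite !mxE nth_default // sP; exact: ij.
  apply: big1 => i _; rewrite !mxE.
  have Pm : P i \is monic by apply: monic_prod_XsubC.
  by move: (monicP Pm); rewrite lead_coefE sP.
rewrite mulr1 mulf_neq0 //.
  apply/prodf_neq0 => i _; rewrite mxE invr_eq0; exact: fact_nz.
apply/prodf_neq0 => i _; apply/prodf_neq0 => j ij; rewrite !mxE subr_eq0.
apply/eqP => /(nat_inj (tp j) (tp i)) /tinj ji.
by move: ij; rewrite ji ltnn.
Qed.


Definition rsum (C : {set F}) (k : nat) : {set F} :=
  [set \sum_(x in T) x | T : {set F} in [set T : {set F} | (T \subset C) && (#|T| == k)]].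

Lemma card_take_set (C : {set F}) a : (a <= #|C|)%N ->
  #|[set x in take a (enum C)]| = a.
Proof.
move=> le; rewrite cardsE.
move/card_uniqP: (take_uniq a (enum_uniq (mem C))) => ->.
by rewrite size_takel // -cardE.
Qed.

Lemma take_set_sub (C : {set F}) a : [set x in take a (enum C)] \subset C.
Proof.
by apply/subsetP => x; rewrite inE => /mem_take; rewrite mem_enum.
Qed.

Lemma sum_ind_ord k r : (r <= k)%N -> (\sum_(i < k) (k - r <= i) = r)%N.
Proof.
move=> rk; rewrite -(big_mkord xpredT (fun i => (k - r <= i)%N : nat)).
rewrite (@big_cat_nat _ _ _ (k - r) 0 k _ _ (leq0n _) (leq_subr r k)) /=.
rewrite big_nat_cond big1 ?add0n; last by move=> i /andP[/andP[_ lt] _]; rewrite leqNgt lt.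
rewrite big_nat_cond (eq_bigr (fun _ => 1%N)); last by move=> i /andP[/andP[-> _] _].
by rewrite -big_nat_cond sum_nat_const_nat muln1 subKn.
Qed.

Lemma DdSH (C : {set F}) k m : (#|C| <= p)%N -> (k <= #|C|)%N -> (m < p)%N ->
  (m <= k * (#|C| - k))%N -> (m < #|rsum C k|)%N.
Proof.
move=> Cp kC mp mk; rewrite ltnNge; apply/negP => Rm.
set n := #|C| in Cp kC mk.
set R := rsum C k in Rm.
case: k kC mk @R Rm => [|k] kC mk R Rm.
  have : (0 : F) \in R.
    apply/imsetP; exists set0; last by rewrite big_set0.
    by rewrite inE sub0set cards0.
  move: mk; rewrite mul0n leqn0 => /eqP m0; move: Rm; rewrite m0 leqn0 cards_eq0.
  by move=> /eqP ->; rewrite inE.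
pose q0 := (m %/ k.+1)%N; pose r := (m %% k.+1)%N.
have hm : m = (q0 * k.+1 + r)%N by exact: divn_eq.
have hr : (r < k.+1)%N by rewrite ltn_mod.
pose t (i : 'I_k.+1) := (i + q0 + (k.+1 - r <= i))%N.
have ht_lt i : (t i < n)%N.
  have il := ltn_ord i; rewrite /t.
  case: (posnP r) => r0.
    have -> : (k.+1 - r <= i)%N = false by rewrite r0 subn0 leqNgt il.
    have : (q0 * k.+1 <= k.+1 * (n - k.+1))%N by apply: leq_trans mk; rewrite hm; lia.
    rewrite mulnC leq_pmul2l // => h.
    rewrite addn0; lia.
  have : (q0 * k.+1 < k.+1 * (n - k.+1))%N.
    apply: leq_trans mk; rewrite hm; lia.
  rewrite mulnC ltn_pmul2l // => h.
  case: (k.+1 - r <= i)%N; lia.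
have ht_mono (i j : 'I_k.+1) : (i < j)%N -> (t i < t j)%N.
  move=> ij; rewrite /t.
  case: (leqP (k.+1 - r) i) => Hi; case: (leqP (k.+1 - r) j) => Hj; lia.
have ht_inj : injective t.
  move=> i j; case: (ltngtP i j) => [ij|ij|/val_inj //] e.
    by have := ht_mono _ _ ij; rewrite e ltnn.
  by have := ht_mono _ _ ij; rewrite e ltnn.
have ht_sum : (\sum_i t i = \sum_(i < k.+1) (i : nat) + m)%N.
  rewrite !big_split /= (sum_ind_ord (ltnW hr)) sum_nat_const card_ord.
  by rewrite hm mulnC addnA.
pose S (i : 'I_k.+1) := [set x in take (t i).+1 (enum C)].
have cardS i : #|S i| = (t i).+1 by apply: card_take_set; exact: ht_lt.
have SC i : S i \subset C by exact: take_set_sub.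
have factnz i a : (a <= t i)%N -> (a`!)%:R != 0 :> F.
  move=> le; apply: fact_nz; apply: leq_ltn_trans le _.
  exact: leq_trans (ht_lt i) Cp.
pose q := (\prod_(e <- enum R) ('X - e%:P)) * 'X^(m - #|R|).
have qm : q \is monic by rewrite /q monicMr ?monicXn // monic_prod_XsubC.
have sq : size q = m.+1.
  rewrite /q size_Mmonic ?monicXn ?monic_neq0 ?monic_prod_XsubC //.
  rewrite size_prod_XsubC size_polyXn -cardE; lia.
have hD (s : 'S_k.+1) : (\sum_i (s i : nat) = \sum_(i < k.+1) (i : nat))%N.
  by rewrite [RHS](reindex_inj (@perm_inj _ s)).
have := @engine F k.+1 t S cardS factnz 'S_k.+1 (fun s => (-1) ^+ s)
   (fun s i => s i) (\sum_(i < k.+1) (i : nat)) q m hD qm sq (esym ht_sum).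
rewrite big1; last first.
  move=> c /familyP cS.
  have W : \sum_(s : 'S_k.+1) (-1) ^+ s * \prod_i c i ^+ s i
         = \det (\matrix_(i, j) c i ^+ j : 'M[F]_k.+1).
    by rewrite /determinant; apply: eq_bigr => s _; congr (_ * _); apply: eq_bigr => i _; rewrite mxE.
  rewrite W; case: (boolP (injectiveb c)) => [/injectiveP cinj|/injectivePn [i [j ij cij]]].
    have Rin : \sum_i c i \in R.
      apply/imsetP; exists [set c i | i : 'I_k.+1].
        rewrite inE card_imset // card_ord eqxx andbT.
        apply/subsetP => x /imsetP [i _ ->]; exact: (subsetP (SC i)) _ (cS i).
      by rewrite big_imset //= => x y _ _; exact: cinj.
    rewrite /q hornerM horner_prod (bigD1_seq (\sum_i c i)) ?mem_enum ?enum_uniq //=.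
    by rewrite hornerXsubC subrr !mul0r !mulr0.
  rewrite (determinant_alternate ij); first by rewrite !mul0r mulr0.
  by move=> l; rewrite !mxE cij.
move/esym/eqP; apply/negP.
have -> : \sum_(s : 'S_k.+1) (-1) ^+ s *
      (if [forall i, s i <= t i]%N then m`!%:R / \prod_i ((t i - s i)`!)%:R else 0)
   = m`!%:R * \det (\matrix_(i, j) (if (j <= t i)%N then ((t i - j)`!)%:R^-1 else 0) : 'M[F]_k.+1).
  rewrite /determinant mulr_sumr; apply: eq_bigr => s _.
  rewrite mulrCA; congr (_ * _).
  case: ifP => [/forallP al | /negbT]; last first.
    rewrite negb_forall => /existsP [i ni].
    by rewrite (bigD1 i) //= mxE (negbTE ni) mul0r mulr0.
  rewrite -prodfV; congr (_ * _); apply: eq_bigr => i _; by rewrite mxE al.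
rewrite mulf_neq0 //; first exact: fact_nz.
apply: detM_nz => // i; exact: leq_trans (ht_lt i) Cp.
Qed.


Definition msum (X Y : {set F}) : {set F} := [set x + y | x in X, y in Y].

Lemma CD0 (X Y : {set F}) : (0 < #|X|)%N -> (0 < #|Y|)%N -> (#|X| + #|Y| <= p.+1)%N ->
  ((#|X| + #|Y|).-1 <= #|msum X Y|)%N.
Proof.
move=> X0 Y0 le; rewrite leqNgt; apply/negP => lt.
set R := msum X Y in lt.
pose m := (#|X| + #|Y|).-2.
have Rm : (#|R| <= m)%N by rewrite /m; lia.
pose t (i : 'I_2) := if i == ord0 then #|X|.-1 else #|Y|.-1.
pose S (i : 'I_2) := if i == ord0 then X else Y.
have cardS i : #|S i| = (t i).+1 by rewrite /S /t; case: ifP; lia.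
have factnz i a : (a <= t i)%N -> (a`!)%:R != 0 :> F.
  move=> h; apply: fact_nz; move: h; rewrite /t; case: ifP => _; lia.
pose q := (\prod_(e <- enum R) ('X - e%:P)) * 'X^(m - #|R|).
have qm : q \is monic by rewrite /q monicMr ?monicXn // monic_prod_XsubC.
have sq : size q = m.+1.
  rewrite /q size_Mmonic ?monicXn ?monic_neq0 ?monic_prod_XsubC //.
  rewrite size_prod_XsubC size_polyXn -cardE /m; lia.
have hD (s : 'I_1) : (\sum_(i < 2) (fun (_ : 'I_1) (_ : 'I_2) => 0%N) s i = 0)%N.
  by rewrite big1.
have hm : (0 + m = \sum_i t i)%N.
  rewrite big_ord_recl big_ord1 /t /= /m add0n; move: X0 Y0.
  by case: #|X| => // a; case: #|Y| => // b _ _; rewrite addSn addnS.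
have := @engine F 2 t S cardS factnz 'I_1 (fun _ => 1)
   (fun _ _ => 0%N) 0%N q m hD qm sq hm.
rewrite big1; last first.
  move=> c /familyP cS.
  have Rin : \sum_i c i \in R.
    rewrite big_ord_recl big_ord1; apply/imset2P; econstructor.
    - exact: (cS ord0).
    - exact: (cS (lift ord0 ord0)).
    - done.
  rewrite /q hornerM horner_prod (bigD1_seq (\sum_i c i)) ?mem_enum ?enum_uniq //=.
  by rewrite hornerXsubC subrr !mul0r !mulr0.
rewrite big_ord1 mul1r.
have -> : [forall i, 0 <= t i]%N by apply/forallP.
move/esym/eqP; apply/negP; apply: mulf_neq0.
  by apply: fact_nz; rewrite /m; lia.
rewrite invr_eq0; apply/prodf_neq0 => i _; rewrite subn0; exact: factnz.
Qed.

Lemma CD (X Y : {set F}) : #|F| = p -> X != set0 -> Y != set0 ->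
  (minn p (#|X| + #|Y|).-1 <= #|msum X Y|)%N.
Proof.
move=> cF; rewrite -!card_gt0 => X0 Y0.
have Xp : (#|X| <= p)%N by rewrite -cF max_card.
case: (leqP (#|X| + #|Y|) p.+1) => le.
  by apply: leq_trans (geq_minr _ _) _; exact: CD0.
apply: leq_trans (geq_minl _ _) _.
pose Y' := [set y in take (p.+1 - #|X|) (enum Y)].
have cY' : #|Y'| = (p.+1 - #|X|)%N by apply: card_take_set; lia.
have h0 : (0 < #|Y'|)%N by rewrite cY' subn_gt0 ltnS.
have e1 : (#|X| + #|Y'| = p.+1)%N by rewrite cY' subnKC // ltnW.
have h := @CD0 X Y' X0 h0 (eq_leq e1).
rewrite e1 /= in h; apply: leq_trans h _.
apply: subset_leq_card; apply: imset2Sr; exact: take_set_sub.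
Qed.

Section Iter.
Variable I : eqType.
Variable C : I -> {set F}.
Variable k : I -> nat.

Definition fsum (r : seq I) :=
  foldr (fun i acc => msum (rsum (C i) (k i)) acc) [set 0] r.

Lemma fsum_card (b : I -> nat) r : #|F| = p ->
  (forall i, minn p (b i).+1 <= #|rsum (C i) (k i)|)%N ->
  (minn p (\sum_(i <- r) b i).+1 <= #|fsum r|)%N.
Proof.
move=> cF hb; have p1 := prime_gt1 pr.
elim: r => [|i r IH] /=; first by rewrite big_nil cards1 geq_minr.
rewrite big_cons.
set Q := fsum r in IH *; set Ri := rsum (C i) (k i).
have Q0 : (0 < #|Q|)%N by apply: leq_trans IH; rewrite leq_min ltnS leq0n andbT ltnW.
have R0 : (0 < #|Ri|)%N by apply: leq_trans (hb i); rewrite leq_min ltnS leq0n andbT ltnW.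
have := CD cF (_ : Ri != set0) (_ : Q != set0).
rewrite -!card_gt0 => /(_ R0 Q0) h.
have hbi := hb i.
rewrite -subn1 in h; apply: leq_trans h.
move: hbi IH Q0 R0; move: (\sum_(j <- r) b j) (b i) #|Q| #|Ri| => s bi x y; lia.
Qed.

Lemma fsum_mem r z : uniq r -> z \in fsum r ->
  exists T : I -> {set F},
    (forall i, i \in r -> T i \subset C i /\ #|T i| = k i) /\
    z = \sum_(i <- r) \sum_(x in T i) x.
Proof.
elim: r z => [|i r IH] z /=.
  rewrite inE => _ /eqP ->; exists (fun _ => set0); split => //.
  by rewrite big_nil.
case/andP => ir ur /imset2P [x y xR yQ ->].
have [T [hT eT]] := IH y ur yQ.
case/imsetP: xR => T0; rewrite inE => /andP [T0C /eqP T0k] ->.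
exists (fun j => if j == i then T0 else T j); split.
  move=> j; rewrite inE; case: eqP => [-> _|_ /= jr]; first by split.
  exact: hT.
rewrite big_cons eqxx eT; congr (_ + _).
apply: eq_big_seq => j jr; case: eqP => // ji.
by move: ir; rewrite -ji jr.
Qed.

End Iter.

End Sums.

Section G.
Variable p : nat.
Hypothesis pr : prime p.
Definition eqc : (Zp_trunc (pdiv p)).+2 = (Zp_trunc p).+2 := congr1 (fun n => n.+2) (Fp_Zcast pr).
Definition gF (a : 'F_p) : 'Z_p := cast_ord eqc a.
Definition hF (a : 'Z_p) : 'F_p := cast_ord (esym eqc) a.
Lemma gD a b : gF (a + b) = gF a + gF b.
Proof. apply: val_inj => /=. have e := Fp_Zcast pr. by congr ((_ %% _.+2)%N). Qed.
Lemma g0 : gF 0 = 0. Proof. by apply: val_inj. Qed.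
Lemma gK a : gF (hF a) = a. Proof. by apply: val_inj. Qed.
Lemma g_inj : injective gF. Proof. by move=> a b /(congr1 val) /= /val_inj. Qed.
End G.

Unset Implicit Arguments.

Theorem lemma5 (p : nat) (pr_p : prime p) (ol : nat) (hol : is_Ol p ol)
  (A : {set Zp2 p}) (hA : #|A| = (p.-1 + ol)%N)
  (U : {set Zp2 p})
  (hU : exists f : {additive 'Z_p -> Zp2 p},
          injective f /\ U = [set f a | a : 'Z_p])
  (B : {set Zp2 p}) (hBA : B \subset A)
  (pi : {additive Zp2 p -> 'Z_p}) (hpi_surj : forall z : 'Z_p, exists y, pi y = z)
  (hpi_ker : forall y, (pi y == 0) = (y \in U))
  (x : 'I_p -> Zp2 p)
  (hx_cover : forall y : Zp2 p, exists i, y \in coset2 (x i) U)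
  (hx_distinct : forall i j, x j \in coset2 (x i) U -> i = j)
  (hB : forall z : 'Z_p, exists S : {set Zp2 p},
          S \subset B /\ \sum_(b in S) pi b = z)
  (hsum : (p.+1 <= \sum_(i < p)
             (Ncount (x i) U (A :\: B))./2 * uphalf (Ncount (x i) U (A :\: B)))%N) :
  exists S : {set Zp2 p}, [/\ S \subset A, S != set0 & \sum_(s in S) s = 0].
Proof.
have [f [finj hUf]] := hU.
pose phi (a : 'F_p) : Zp2 p := f (gF pr_p a).
have phiD a b : phi (a + b) = phi a + phi b by rewrite /phi gD raddfD.
have phi0 : phi 0 = 0 by rewrite /phi g0 raddf0.
have phiN a : phi (- a) = - phi a.
  by apply/eqP; rewrite -subr_eq0 opprK -phiD addNr phi0.
have phi_sum (T : {set 'F_p}) : phi (\sum_(u in T) u) = \sum_(u in T) phi u.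
  exact: (big_morph phi phiD phi0).
have phi_inj : injective phi by move=> a b /finj /g_inj.
have phiU y : (y \in U) = (y \in [set phi a | a : 'F_p]).
  rewrite hUf; apply/imsetP/imsetP => [[a _ ->]|[a _ ->]].
    by exists (hF pr_p a) => //; rewrite /phi gK.
  by exists (gF pr_p a).
have chp := pchar_Fp pr_p.
have cF := card_Fp pr_p.
pose C (i : 'I_p) := [set u : 'F_p | x i + phi u \in A :\: B].
have hinj i : injective (fun u => x i + phi u) by move=> u v /addrI /phi_inj.
have hN i : Ncount (x i) U (A :\: B) = #|C i|.
  rewrite /Ncount -(card_imset (C i) (hinj i)).
  apply: eq_card => y; rewrite /coset2 in_setI.
  apply/andP/imsetP => [[yA /imsetP [u uU ey]]|[a aC ->]].
    move: uU; rewrite phiU => /imsetP [a _ ea].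
    by exists a; [rewrite inE -ea -ey | rewrite ey ea].
  move: aC; rewrite inE => aC; split => //.
  by apply/imsetP; exists (phi a) => //; rewrite phiU; apply/imsetP; exists a.
pose k i := (#|C i|)./2.
pose b i := (k i * (#|C i| - k i))%N.
have hsum' : (p.+1 <= \sum_i b i)%N.
  apply: leq_trans hsum _; apply: leq_sum => i _; rewrite hN /b /k.
  move: #|C i| => n; rewrite uphalf_half.
  have := odd_double_half n; rewrite -addnn => e.
  by apply: leq_mul => //; lia.
have Cp i : (#|C i| <= p)%N by apply: leq_trans (max_card _) _; rewrite cF.
have kC i : (k i <= #|C i|)%N by rewrite /k; have := odd_double_half #|C i|; rewrite -addnn; lia.
have hR i : (minn p (b i).+1 <= #|rsum (C i) (k i)|)%N.
  have p1 := prime_gt1 pr_p.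
  have := @DdSH _ p pr_p chp (C i) (k i) (minn p.-1 (b i)) (Cp i) (kC i).
  move=> /(_ _ _) h.
  have pp : (p.-1 < p)%N by rewrite ltn_predL ltnW.
  have h' := h (leq_ltn_trans (geq_minl _ _) pp) (geq_minr _ _).
  apply: leq_trans h'; move: (b i) => bi; lia.
have fT : fsum C k (index_enum 'I_p) = setT.
  have := @fsum_card _ p pr_p chp _ C k b (index_enum 'I_p) cF hR.
  have -> : minn p (\sum_(i <- index_enum 'I_p) b i).+1 = p.
    by apply/minn_idPl; exact: leq_trans (ltnW hsum') (leqnSn _).
  move=> le; apply/eqP; rewrite eqEcard subsetT cardsT cF; exact: le.
have [i0 ki0] : exists i0, (0 < k i0)%N.
  case: (pickP (fun i => 0 < k i)%N) => [i0 hi0|none]; first by exists i0.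
  have : (\sum_i b i = 0)%N.
    apply: big1 => i _; rewrite /b; have := none i; rewrite /=.
    by case: (k i).
  by move=> e; move: hsum'; rewrite e.
pose s0 := \sum_i x i *+ k i.
have [SB [SBB hSB]] := hB (- pi s0).
pose y := \sum_(c in SB) c.
have piy : pi y = - pi s0 by rewrite raddf_sum.
have : s0 + y \in U by rewrite -hpi_ker raddfD piy subrr.
rewrite phiU => /imsetP [z' _ ez'].
have zin : - z' \in fsum C k (index_enum 'I_p) by rewrite fT inE.
have [T [hT eT]] := fsum_mem (index_enum_uniq _) zin.
have hT' i : T i \subset C i /\ #|T i| = k i by exact: hT (mem_index_enum _).
pose G := [set ij : 'I_p * 'F_p | ij.2 \in T ij.1].
pose h (ij : 'I_p * 'F_p) := x ij.1 + phi ij.2.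
have hinj2 : injective h.
  move=> [i u] [j v]; rewrite /h /= => e.
  have ij : i = j.
    apply: hx_distinct; rewrite /coset2; apply/imsetP; exists (phi (u - v)).
      by rewrite phiU; apply/imsetP; exists (u - v).
    by rewrite phiD phiN addrA e addrK.
  by subst j; congr (_, _); apply: (hinj i).
pose SA := h @: G.
have SAAB : SA \subset A :\: B.
  apply/subsetP => a /imsetP [[i u] uG ->]; move: uG; rewrite inE /= => uT.
  by have := subsetP (hT' i).1 u uT; rewrite inE.
exists (SA :|: SB); split.
- apply/subsetP => a; rewrite in_setU => /orP [aA|aB].
    by have := subsetP SAAB a aA; rewrite in_setD => /andP [].
  exact: (subsetP hBA a (subsetP SBB a aB)).
- have : (0 < #|T i0|)%N by rewrite (hT' i0).2.
  rewrite card_gt0 => /set0Pn [u uT].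
  apply/set0Pn; exists (h (i0, u)); rewrite in_setU; apply/orP; left.
  by apply/imsetP; exists (i0, u) => //; rewrite inE.
have disj : [disjoint SA & SB].
  rewrite -setI_eq0; apply/eqP/setP => a; rewrite !inE.
  apply/negbTE/negP => /andP [aSA aSB].
  by have := subsetP SAAB a aSA; rewrite in_setD (subsetP SBB a aSB).
have -> : \sum_(s in SA :|: SB) s = \sum_(s in [predU SA & SB]) s.
  by apply: eq_bigl => a; rewrite !inE.
rewrite bigU // -/y.
rewrite big_imset /=; last by move=> u v _ _; exact: hinj2.
have -> : \sum_(ij in G) h ij = \sum_i \sum_(u in T i) (x i + phi u).
  rewrite pair_big_dep; apply: eq_bigl => -[i u]; by rewrite inE.
under eq_bigr => i _ do rewrite big_split /= sumr_const (hT' i).2 -phi_sum.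
rewrite big_split /= -/s0 -(big_morph phi phiD phi0) -eT.
by rewrite addrAC ez' phiN subrr.
Qed.
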